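(* Let $n$ be a positive integer and let $p$ be a prime number with $p>n^2/4+1$. Then there is no arithmetical structure $(r_1,\dots,r_n)$ on $K_n$ with $r_1=p$.
   Context: An arithmetical structure on the complete graph $K_n$ is an $n$-tuple $(r_1,r_2,\dots,r_n)$ of positive integers with $\gcd(r_1,\dots,r_n)=1$ such that $r_j$ divides $\sum_{i=1}^n r_i$ for every $j$. The entries are always listed so that $r_1\geq r_2\geq\dots\geq r_n$; thus $r_1$ is the largest value of the structure. *)

(* Defs.v *)
From mathcomp Require Import all_boot.
Set Implicit Arguments. Unset Strict Implicit. Unset Printing Implicit Defensive.

Definition arith_struct_Kn (n : nat) (r : seq nat) : Prop :=
  [/\ size r = n,
      all (fun x => 0 < x) r,
      sorted geq r,
      foldr gcdn 0 r = 1
    & all (fun x => x %| sumn r) r].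

(* Main.v *)
Require Import Defs.
From mathcomp Require Import all_boot.
From mathcomp Require Import zify.

Lemma sumn_le (s : seq nat) c : (forall x, x \in s -> x <= c) -> sumn s <= size s * c.
Proof.
elim: s => [|x s IH] //= H.
have := H x (mem_head _ _). have := IH (fun y hy => H y ltac:(by rewrite inE hy orbT)). lia.
Qed.

Lemma sumn_eqc (s : seq nat) c : (forall x, x \in s -> x = c) -> sumn s = size s * c.
Proof.
elim: s => [|x s IH] //= H.
have := H x (mem_head _ _). have := IH (fun y hy => H y ltac:(by rewrite inE hy orbT)). lia.
Qed.

Lemma sumn_split (a : pred nat) (s : seq nat) :
  sumn s = sumn (filter a s) + sumn (filter (predC a) s).
Proof. elim: s => [|x s IH] //=; case: (a x) => /=; lia. Qed.

Lemma size_split (a : pred nat) (s : seq nat) :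
  size s = size (filter a s) + size (filter (predC a) s).
Proof. elim: s => [|x s IH] //=; case: (a x) => /=; lia. Qed.

Lemma sumn_pos (s : seq nat) : (forall x, x \in s -> 0 < x) -> 0 < size s -> 0 < sumn s.
Proof.
case: s => [|x s] //= H _. have := H x (mem_head _ _). lia.
Qed.

Lemma dvd_foldr d (s : seq nat) : (forall x, x \in s -> d %| x) -> d %| foldr gcdn 0 s.
Proof.
elim: s => [|x s IH] //= H.
rewrite dvdn_gcd H ?mem_head //= IH // => y hy; apply: H; by rewrite inE hy orbT.
Qed.

Lemma half_div d k : 0 < k -> d %| k -> d != k -> 2 * d <= k.
Proof.
move=> k0 /dvdnP [q kq] ne; subst k.
case: q ne k0 => [|[|q]] ne k0.
- move: k0; lia.
- by move: ne; rewrite mul1n eqxx.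
- nia.
Qed.

Lemma amgm u k : 4 * (u * k) <= (u + k) ^ 2.
Proof.
case: (leqP u k) => h.
- have [d ->] : exists d, k = u + d by exists (k - u); lia.
  rewrite -mulnn; nia.
- have [d ->] : exists d, u = k + d by exists (u - k); lia.
  rewrite -mulnn; nia.
Qed.
Lemma case_e2 m t e p : 2 <= e -> e * p <= t * (m + e) -> (m + t) ^ 2 < 4 * (p - 1) -> False.
Proof.
move=> he h1 h2.
have h3 : e * (2 * p) <= e * (t * (m + 2)).
  have : 2 * (m + e) <= e * (m + 2) by nia.
  nia.
have h4 : 2 * p <= t * (m + 2) by rewrite leq_pmul2l in h3; lia.
have h5 := amgm t (m + 2).
move: h2 h5; rewrite -!mulnn. nia.
Qed.

Theorem theorem3p2 (n p : nat) :
  0 < n -> prime p -> n ^ 2 < 4 * (p - 1) ->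
  ~ (exists r : seq nat, arith_struct_Kn n r /\ head 0 r = p).
Proof.
move=> n0 pp hn [r [[Hsize Hpos Hsort Hgcd Hdiv] Hhead]].
have p1 : 1 < p by apply: prime_gt1.
have np : n < p.
  rewrite ltnNge; apply/negP => h.
  have hpp : p * p <= n * n by apply: leq_mul.
  move: hn; rewrite -mulnn => hn.
  have := amgm p 2. rewrite -mulnn. nia.
have pin : p \in r.
  case: r Hhead {Hsize Hpos Hsort Hgcd Hdiv} => [|x s] /= Hh; first lia.
  by rewrite Hh mem_head.
have Hle : forall x, x \in r -> x <= p.
  case: r Hhead Hsort pin {Hpos Hgcd Hdiv Hsize} => [|y s] //= -> Hs _ x.
  have := order_path_min (leT := geq) (fun a b c h1 h2 => leq_trans h2 h1) Hs.
  move/allP => H; rewrite inE => /orP [/eqP -> //|]; exact: H.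
have HposP : forall x, x \in r -> 0 < x by apply/allP.
have HdivP : forall x, x \in r -> x %| sumn r by apply/allP.
set S := sumn r.
have [k Sk] : exists k, S = k * p by apply/dvdnP; exact: HdivP.
set P := filter (fun x => x < p) r.
set Q := filter (predC (fun x => x < p)) r.
have hsz := size_split (fun x => x < p) r.
have hsm := sumn_split (fun x => x < p) r.
rewrite -/P -/Q in hsz hsm.
have hQ : sumn Q = size Q * p.
  apply: sumn_eqc => x; rewrite mem_filter /= => /andP [h1 h2].
  have := Hle x h2; lia.
have Q1 : 1 <= size Q.
  have : p \in Q by rewrite mem_filter /= ltnn.
  by case: (Q).
have t1 : 1 <= size P.
  case E: (size P) => //.
  have : p %| foldr gcdn 0 r.
    apply: dvd_foldr => x xr.
    have := Hle x xr; case: (ltnP x p) => h1 h2.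
      have : x \in P by rewrite mem_filter h1.
      by move: E; case: (P).
    by have -> : x = p by lia.
  rewrite Hgcd dvdn1 => /eqP; lia.
have PinR : forall x, x \in P -> x \in r /\ x < p.
  by move=> x; rewrite mem_filter => /andP [].
have Pk : forall x, x \in P -> x %| k.
  move=> x /PinR [xr xp].
  have x0 := HposP x xr.
  have cop : coprime x p.
    rewrite coprime_sym prime_coprime //; apply/negP => /dvdn_leq; lia.
  by rewrite -(Gauss_dvdr _ cop) mulnC -Sk; apply: HdivP.
have sP : 0 < sumn P.
  apply: sumn_pos => // x /PinR [xr _]; exact: HposP.
have k0 : 0 < k.
  move: Sk hsm sP; rewrite /S; case: (k) => //; lia.
have PkL : forall x, x \in P -> x <= k by move=> x /Pk /dvdn_leq; apply.
have hPle := @sumn_le P k PkL.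
rewrite -/S in hsm.
set m := size Q in hQ Q1 hsz hsm.
set t := size P in hsz t1 hPle.
have Hnt : n = m + t by lia.
have sPe : sumn P + m * p = k * p by lia.
have km : m < k.
  rewrite ltnNge; apply/negP => h; have := leq_mul h (leqnn p); lia.
have [e ke] : exists e, k = m + e by exists (k - m); lia.
have sPe' : sumn P = e * p by move: sPe; rewrite ke mulnDl; lia.
case: (leqP 2 e) => he.
  exfalso; apply: (@case_e2 m t e p) => //.
    by rewrite -sPe' -ke.
  by rewrite -Hnt.
have e1 : e = 1 by lia.
have sPp : sumn P = p by rewrite sPe' e1 mul1n.
rewrite e1 addn1 in ke.
set A := filter (pred1 k) P.
set B := filter (predC (pred1 k)) P.
have hsz2 := size_split (pred1 k) P.
have hsm2 := sumn_split (pred1 k) P.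
rewrite -/A -/B -/t in hsz2 hsm2.
have hA : sumn A = size A * k.
  by apply: sumn_eqc => x; rewrite mem_filter /= => /andP [/eqP].
have hB : 2 * sumn B <= size B * k.
  have := @sumn_le (map (fun x => 2 * x) B) k.
  have -> : sumn (map (fun x => 2 * x) B) = 2 * sumn B.
    by elim: (B) => [|x s IH] //=; rewrite IH; lia.
  rewrite size_map; apply => y /mapP [x]; rewrite mem_filter /= => /andP [xk xP] ->.
  apply: half_div => //; exact: Pk.
have hpt : p <= (t - 1) * k + 1.
  case EB: B hB hsm2 => [|d [|d' s]] hB hsm2.
  - exfalso.
    have kp : k %| p by rewrite -sPp hsm2 hA /= addn0 dvdn_mull.
    have k1 : k != 1 by lia.
    have := prime_nt_dvdP pp k1 kp; lia.
  - have dB : d \in B by rewrite EB mem_head.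
    move: dB; rewrite mem_filter /= => /andP [dk dP].
    have dkk := Pk d dP.
    have dp : d %| p.
      rewrite -sPp hsm2 hA /= addn0 dvdn_addr //; exact: dvdn_mull.
    have d0 : 0 < d by have [dr _] := PinR d dP; exact: HposP.
    have dlt : d < p by have [_ ] := PinR d dP.
    have d1 : d = 1.
      case: (eqVneq d 1) => // d1; have := prime_nt_dvdP pp d1 dp; lia.
    move: hsz2; rewrite EB /= => hsz2.
    have -> : t - 1 = size A by rewrite hsz2 addnK.
    move: hsm2; rewrite sPp hA /=; lia.
  - move: hsz2; rewrite EB /= => hsz2.
    move: hB hsm2 hsz2; rewrite sPp hA /=.
    set a := size A; set c := size s => hB hsm2 hsz2.
    have -> : t - 1 = a + c.+1 by rewrite hsz2 !addnS subn1.
    move: hB hsm2; rewrite !mulSn !mulnDl mulSn; lia.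
have := amgm (t - 1) k.
have -> : t - 1 + k = n by lia.
lia.
Qed.
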